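(* Let $S=[\alpha+1,\alpha+m]^\circ$ be a cyclic interval of $[n]$ and let $r<m$. Set $S^\vee=[n]\setminus S$ (the cyclic interval $[\alpha+m+1,\alpha]^\circ$) and $r^\vee=n-k-m+r$. Then $\varphi(X_{S\le r})=X_{S^\vee\le r^\vee}$, where $X_{S\le r}\subseteq\mathrm{Gr}(k,n)$ and $X_{S^\vee\le r^\vee}\subseteq\mathrm{Gr}(n-k,n)$.
   Context: Let $\Bbbk$ be algebraically closed of characteristic $0$, $1\le k<n$. For $0\le\alpha\le n-1$ and $1\le m<n$, $[\alpha+1,\alpha+m]^\circ$ is $\{\alpha+1,\dots,\alpha+m\}$ reduced modulo $n$ into $[n]$. For $S\subseteq[n]$, $r\ge0$ and $p\in\{k,n-k\}$, $X_{S\le r}\subseteq\mathrm{Gr}(p,n)$ is the set of $p$-planes $V$ such that the columns indexed by $S$ of a $p\times n$ matrix with row span $V$ have rank $\le r$. $\varphi:\mathrm{Gr}(k,n)\to\mathrm{Gr}(n-k,n)$ is the isomorphism given in Plücker coordinates by $[\mathbf a]\mapsto[[n]\setminus\mathbf a]$, i.e. the $([n]\setminus\mathbf a)$-Plücker coordinate of $\varphi(V)$ equals the $\mathbf a$-Plücker coordinate of $V$ (this stratification-preserving isomorphism agrees, up to rescaling columns by signs, with $V\mapsto V^\perp$). *)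

(* Defs.v *)
From HB Require Import structures.
From mathcomp Require Import all_boot all_order all_algebra.
Set Implicit Arguments. Unset Strict Implicit. Unset Printing Implicit Defensive.
Import GRing.Theory Num.Theory.
Local Open Scope ring_scope.

(* Indices: [n] = {1..n} is modelled by 'I_n = {0..n-1} (shift by one). *)

(* Cyclic interval [alpha+1, alpha+m]° of [n], in 0-based indexing:
   { (alpha + j) mod n | j < m }. *)
Definition cyc_interval (n alpha m : nat) : {set 'I_n} :=
  [set i : 'I_n | [exists j : 'I_m, (nat_of_ord i == (alpha + j) %% n)%N]].

Definition colS (F : fieldType) (p n : nat) (A : 'M[F]_(p, n)) (S : {set 'I_n})
  : 'M[F]_(p, #|S|) := \matrix_(i < p, j < #|S|) A i (enum_val j).

(* X_{S <= r}: the row span of the (full-rank) p x n matrix A lies in X_{S<=r}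
   iff the columns indexed by S have rank <= r. *)
Definition inX (F : fieldType) (p n : nat) (S : {set 'I_n}) (r : int)
  (A : 'M[F]_(p, n)) : Prop := ((\rank (colS A S))%:Z <= r)%R.

Definition pluck (F : fieldType) (p n : nat) (A : 'M[F]_(p, n)) (a : {set 'I_n}) : F :=
  \det (\matrix_(i < p, j < p) nth 0 [seq A i c | c <- enum a] j).

(* phi_rel A B : the point of Gr(n-k,n) spanned by B equals phi of the point of
   Gr(k,n) spanned by A, i.e. the ([n]\a)-Plücker coordinate of B equals the
   a-Plücker coordinate of A, up to a common nonzero scalar (projective coords). *)
Definition phi_rel (F : fieldType) (k n : nat) (A : 'M[F]_(k, n))
  (B : 'M[F]_(n - k, n)) : Prop :=
  exists2 c : F, c != 0 &
    forall a : {set 'I_n}, #|a| = k -> pluck B (~: a) = c * pluck A a.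

(* Main.v *)
Require Import Defs.
From HB Require Import structures.
From mathcomp Require Import all_boot all_order all_algebra.
From mathcomp Require Import fingroup perm zify ring.
Set Implicit Arguments. Unset Strict Implicit. Unset Printing Implicit Defensive.
Import GRing.Theory Num.Theory.
Local Open Scope ring_scope.

Definition Sel (F : fieldType) p n (a : {set 'I_n}) : 'M[F]_(p, n) :=
  \matrix_(j < p, i < n) ((i \in a) && (index i (enum a) == j))%:R.
Arguments Sel {F} p {n} a.

Lemma sum_index (F : fieldType) (T : eqType) (s : seq T) (f : T -> F) (j : nat) :
  uniq s -> \sum_(c <- s) f c * (index c s == j)%:R = nth 0 (map f s) j.
Proof.
elim: s j => [|x s IH] j /=; first by rewrite big_nil nth_nil.
case/andP=> xs us; rewrite big_cons.
have -> : \sum_(c <- s) f c * (index c (x :: s) == j)%:R =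
   \sum_(c <- s) f c * ((index c s == j.-1) && (j != 0%N))%:R.
  apply: eq_big_seq => c cs /=.
  have -> : (x == c) = false by apply/negbTE; apply: contraNneq xs => ->.
  by destruct j as [|j]; rewrite /= ?andbF ?andbT ?eqSS.
rewrite /= eqxx.
destruct j as [|j]; rewrite /=.
  by rewrite mulr1 big1 ?addr0 // => c _; rewrite andbF mulr0.
by rewrite mulr0 add0r -IH //; apply: eq_bigr => c _; rewrite andbT.
Qed.

Lemma mulSelT (F : fieldType) p' p n (A : 'M[F]_(p', n)) (a : {set 'I_n}) :
  A *m (Sel p a)^T = \matrix_(i < p', j < p) nth 0 [seq A i c | c <- enum a] j.
Proof.
apply/matrixP=> i j; rewrite !mxE -(sum_index (A i) j (enum_uniq (mem a))).
rewrite big_enum /= [RHS]big_mkcond /=; apply: eq_bigr => c _; rewrite !mxE.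
by case: (c \in a); rewrite ?mulr0.
Qed.

Lemma pluckE (F : fieldType) p n (A : 'M[F]_(p, n)) a :
  pluck A a = \det (A *m (Sel p a)^T).
Proof. by rewrite mulSelT. Qed.

Lemma colSE (F : fieldType) p n (A : 'M[F]_(p, n)) T :
  colS A T = A *m (Sel #|T| T)^T.
Proof.
rewrite mulSelT; apply/matrixP=> i j; rewrite !mxE.
rewrite (nth_map (enum_val j)); last by rewrite -cardE. congr (A i _).
by rewrite {1}/enum_val; apply: set_nth_default; rewrite -cardE.
Qed.

Lemma nth_map_enum (F : fieldType) n (a : {set 'I_n}) (f : 'I_n -> F) (j : nat) :
  (j < #|a|)%N ->
  exists x, [/\ x \in a, index x (enum a) = j & nth 0 [seq f c | c <- enum a] j = f x].
Proof.
rewrite cardE; case e: (enum a) => [|x0 s] //; rewrite -e => jl.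
exists (nth x0 (enum a) j); split.
- by rewrite -mem_enum mem_nth.
- by rewrite index_uniq // enum_uniq.
- by rewrite (nth_map x0).
Qed.

Lemma nth_map_enum_big (F : fieldType) n (a : {set 'I_n}) (f : 'I_n -> F) (j : nat) :
  (#|a| <= j)%N -> nth 0 [seq f c | c <- enum a] j = 0.
Proof. by move=> h; rewrite nth_default // size_map -cardE. Qed.

Lemma Sel_id (F : fieldType) p n (a : {set 'I_n}) :
  #|a| = p -> Sel p a *m (Sel p a)^T = 1%:M :> 'M[F]_p.
Proof.
move=> ha; apply/matrixP=> j j'; rewrite mulSelT !mxE.
have jl : (j' < #|a|)%N by rewrite ha.
have [x [xa ix ->]] := nth_map_enum ((Sel p a : 'M[F]_(p, n)) j) jl.
by rewrite !mxE xa ix /= eq_sym.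
Qed.

Lemma Sel_disj (F : fieldType) p q n (a b : {set 'I_n}) :
  a :&: b = set0 -> Sel p a *m (Sel q b)^T = 0 :> 'M[F]_(p, q).
Proof.
move=> hab; apply/matrixP=> j j'; rewrite mulSelT !mxE.
case: (ltnP j' #|b|) => hj; last by rewrite nth_map_enum_big.
have [x [xb ix ->]] := nth_map_enum ((Sel p a : 'M[F]_(p, n)) j) hj.
rewrite !mxE; case xa: (x \in a) => //=.
by move: (in_set0 x); rewrite -hab inE xa xb.
Qed.

Lemma SelTSel (F : fieldType) p n (a : {set 'I_n}) i i' :
  #|a| = p -> ((Sel p a)^T *m Sel p a) i i' = ((i \in a) && (i == i'))%:R :> F.
Proof.
move=> ha; rewrite !mxE.
case ia: (i \in a) => /=; last first.
  by rewrite big1 // => j _; rewrite !mxE ia mul0r.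
have il : (index i (enum a) < p)%N by rewrite -ha cardE index_mem mem_enum.
rewrite (bigD1 (Ordinal il)) //= big1 ?addr0; last first.
  move=> j jne; rewrite !mxE ia /=.
  case: eqP => [e|]; last by rewrite mul0r.
  by case/eqP: jne; apply: val_inj; rewrite /= e.
rewrite !mxE ia eqxx mul1r.
case ia': (i' \in a) => /=; last first.
  by case: eqP => // e; rewrite -e ia in ia'.
have -> : (index i' (enum a) == index i (enum a)) = (i == i').
  apply/eqP/eqP => [e|e]; last by rewrite e.
  by apply/esym; apply: (index_inj i _ _ e); rewrite mem_enum.
by [].
Qed.

Lemma SelT_sum (F : fieldType) p q n (a : {set 'I_n}) :
  #|a| = p -> #|~:a| = q ->
  (Sel p a)^T *m Sel p a + (Sel q (~:a))^T *m Sel q (~:a) = 1%:M :> 'M[F]_n.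
Proof.
move=> ha hb; apply/matrixP=> i i'; rewrite mxE (SelTSel F i i' ha) (SelTSel F i i' hb).
rewrite inE !mxE; case: (i \in a); rewrite /= ?addr0 ?add0r //.
Qed.

Lemma kerbasis (F : fieldType) p q n (A : 'M[F]_(p, n)) :
  row_free A -> (p + q)%N = n ->
  exists B : 'M[F]_(q, n), row_free B && (B == kermx A^T)%MS.
Proof.
move=> fA e.
have hq : \rank (kermx A^T) = q by rewrite mxrank_ker mxrank_tr (eqP fA) -e addKn.
rewrite -hq; exists (row_base (kermx A^T)); rewrite row_base_free /=.
by apply/eqmxP; apply: eq_row_base.
Qed.

Lemma det_id (F : fieldType) p q (A : 'M[F]_(p, p + q)) (B : 'M[F]_(q, p + q)) C D :
  A *m B^T = 0 ->
  \det (col_mx A C) * \det (col_mx D B) = \det (A *m D^T) * \det (C *m B^T).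
Proof.
move=> AB; rewrite -(det_tr (col_mx D B)) -det_mulmx tr_col_mx mul_col_row AB.
by rewrite det_lblock.
Qed.

Definition Pm (F : fieldType) p q (a : {set 'I_(p + q)}) : 'M[F]_(p + q) :=
  col_mx (Sel p a) (Sel q (~:a)).

Lemma cardC_pq p q (a : {set 'I_(p + q)}) : #|a| = p -> #|~:a| = q.
Proof. by move=> ha; have := cardsC a; rewrite card_ord ha => /eqP; rewrite eqn_add2l => /eqP. Qed.

Lemma Pm_tr (F : fieldType) p q (a : {set 'I_(p + q)}) :
  #|a| = p -> Pm F a *m (Pm F a)^T = 1%:M.
Proof.
move=> ha; have hb := cardC_pq ha.
rewrite /Pm tr_col_mx mul_col_row !Sel_id // !Sel_disj ?setICr //; last by rewrite setIC setICr.
by rewrite -scalar_mx_block.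
Qed.

Lemma Pm_det2 (F : fieldType) p q (a : {set 'I_(p + q)}) :
  #|a| = p -> \det (Pm F a) * \det (Pm F a) = 1.
Proof.
move=> ha; rewrite -{2}det_tr -det_mulmx Pm_tr //; exact: det1.
Qed.

Lemma F1a (F : fieldType) p q (A : 'M[F]_(p, p + q)) (a : {set 'I_(p + q)}) :
  #|a| = p -> \det (col_mx A (Sel q (~:a))) = \det (Pm F a) * pluck A a.
Proof.
move=> ha; have hb := cardC_pq ha.
have h : \det (col_mx A (Sel q (~:a))) * \det (Pm F a) = pluck A a.
  rewrite -[\det (Pm F a)]det_tr -det_mulmx /Pm tr_col_mx mul_col_row Sel_id // Sel_disj; last by rewrite setIC setICr.
  by rewrite det_ublock det1 mulr1 pluckE.
by rewrite -h mulrCA Pm_det2 // mulr1.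
Qed.

Lemma F1b (F : fieldType) p q (B : 'M[F]_(q, p + q)) (a : {set 'I_(p + q)}) :
  #|a| = p -> \det (col_mx (Sel p a) B) = \det (Pm F a) * pluck B (~:a).
Proof.
move=> ha; have hb := cardC_pq ha.
have h : \det (col_mx (Sel p a) B) * \det (Pm F a) = pluck B (~:a).
  rewrite -[\det (Pm F a)]det_tr -det_mulmx /Pm tr_col_mx mul_col_row Sel_id // Sel_disj ?setICr //.
  by rewrite det_lblock det1 mul1r pluckE.
by rewrite -h mulrCA Pm_det2 // mulr1.
Qed.

Lemma NZ (F : fieldType) p n (M : 'M[F]_(p, n)) :
  row_free M -> exists a : {set 'I_n}, #|a| = p /\ pluck M a != 0.
Proof.
move=> fM.
have rM : \rank M^T = p by rewrite mxrank_tr (eqP fM).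
set f := maxrankfun M^T.
set a := [set f j | j : 'I_(\rank M^T)].
have ha : #|a| = p by rewrite card_imset ?card_ord //; apply: maxrankfun_inj.
exists a; split => //.
set X := (Sel p a : 'M[F]_(p, n)) *m M^T.
have sub : (rowsub f M^T <= X)%MS.
  apply/row_subP => j; rewrite row_rowsub.
  have fa : f j \in a by apply/imsetP; exists j.
  have il : (index (f j) (enum a) < p)%N.
    by have := index_mem (f j) (enum a); rewrite mem_enum fa -cardE ha.
  have -> : row (f j) M^T = row (Ordinal il) X.
    rewrite /X row_mul [LHS]rowE; congr (_ *m _); apply/matrixP => z c; rewrite !mxE /=.
    rewrite (ord1 z) eqxx /=; case ca: (c \in a) => /=; last first.
      by case: eqP => // e; move: ca; rewrite e fa.
    have -> : (index c (enum a) == index (f j) (enum a)) = (c == f j).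
      apply/eqP/eqP => [e|e]; last by rewrite e.
      by apply: (index_inj c _ _ e); rewrite mem_enum.
    by [].
  exact: row_sub.
have rX : row_free X.
  rewrite /row_free eqn_leq rank_leq_row /=.
  have := mxrankS sub; rewrite (eqP (maxrowsub_free M^T)) rM //.
rewrite pluckE -det_tr trmx_mul trmxK -unitfE -unitmxE -row_free_unit.
exact: rX.
Qed.

Definition Dg (F : fieldType) n (d : 'I_n -> F) : 'M[F]_n := diag_mx (\row_i d i).

Lemma pluck_scale (F : fieldType) p n (M : 'M[F]_(p, n)) (d : 'I_n -> F) (a : {set 'I_n}) :
  #|a| = p -> pluck (M *m Dg d) a = pluck M a * \prod_(i in a) d i.
Proof.
move=> ha.
have -> : \prod_(i in a) d i = \prod_(j < p) nth 0 [seq d c | c <- enum a] j.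
  rewrite -big_enum /= -(big_map d predT id) (big_nth 0) big_mkord.
  rewrite size_map -cardE ha; apply: eq_bigr => j _ //.
have -> : \prod_(j < p) nth 0 [seq d c | c <- enum a] j = \det (diag_mx (\row_(j < p) nth 0 [seq d c | c <- enum a] j)).
  by rewrite det_diag; apply: eq_bigr => j _; rewrite mxE.
rewrite /pluck -det_mulmx; congr (\det _).
rewrite [RHS]mul_mx_diag; apply/matrixP => i j; rewrite !mxE.
case: (ltnP j #|a|) => hj; last by rewrite !nth_map_enum_big ?mulr0.
have [x [xa ix ->]] := nth_map_enum (fun c => (M *m Dg d) i c) hj.
have [y [ya iy ->]] := nth_map_enum (fun c => M i c) hj.
have [z [za iz ->]] := nth_map_enum d hj.
have -> : x = y by apply: (index_inj x _ _ (etrans ix (esym iy))); rewrite mem_enum.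
have -> : z = y by apply: (index_inj z _ _ (etrans iz (esym iy))); rewrite mem_enum.
by rewrite mul_mx_diag !mxE.
Qed.

Lemma colS_scale (F : fieldType) p n (M : 'M[F]_(p, n)) (d : 'I_n -> F) T :
  colS (M *m Dg d) T = colS M T *m diag_mx (\row_j d (enum_val j)).
Proof. by rewrite mul_mx_diag /Dg mul_mx_diag; apply/matrixP => i j; rewrite !mxE. Qed.

Lemma Dg_free (F : fieldType) n (d : 'I_n -> F) k (e : 'I_k -> 'I_n) :
  (forall i, d i != 0) -> row_free (diag_mx (\row_j d (e j))).
Proof.
move=> hd; rewrite row_free_unit unitmxE det_diag unitfE.
by apply/prodf_neq0 => i _; rewrite mxE.
Qed.

Lemma rank_scale (F : fieldType) p n (M : 'M[F]_(p, n)) (d : 'I_n -> F) T :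
  (forall i, d i != 0) -> \rank (colS (M *m Dg d) T) = \rank (colS M T).
Proof. by move=> hd; rewrite colS_scale mxrankMfree // Dg_free. Qed.

Lemma Sel_free (F : fieldType) p n (a : {set 'I_n}) :
  #|a| = p -> row_free (Sel p a : 'M[F]_(p, n)).
Proof.
move=> ha; rewrite /row_free eqn_leq rank_leq_row /=.
by have := mxrankM_maxl (Sel p a : 'M[F]_(p, n)) (Sel p a)^T; rewrite Sel_id // mxrank1.
Qed.

Lemma rank_formula (F : fieldType) p q n (A : 'M[F]_(p, n)) (B : 'M[F]_(q, n))
  (T : {set 'I_n}) :
  row_free B -> (B == kermx A^T)%MS ->
  (\rank (colS B T) + #|~:T| = q + \rank (colS A (~:T)))%N.
Proof.
move=> fB /andP[sub1 sub2].
have BA : B *m A^T = 0 by apply/sub_kermxP.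
rewrite !colSE.
set ET := (Sel #|T| T : 'M[F]_(_, n)).
set EU := (Sel #|~:T| (~:T) : 'M[F]_(_, n)).
have sum1 : ET^T *m ET + EU^T *m EU = 1%:M.
  have e : #|~:T| = #|~:T| by []. 
  by rewrite /ET /EU (SelT_sum F (erefl #|T|) e).
have disj : EU *m ET^T = 0 by rewrite Sel_disj // setIC setICr.
have fEU : row_free EU by apply: Sel_free.
set K1 := kermx (B *m ET^T).
set K2 := kermx (EU *m A^T).
have eqK : (K1 *m B == K2 *m EU)%MS.
  apply/andP; split.
    set V := K1 *m B.
    have hV1 : V *m ET^T = 0 by rewrite -mulmxA mulmx_ker.
    have hV2 : V *m A^T = 0 by rewrite -mulmxA BA mulmx0.
    have hV : V = (V *m EU^T) *m EU.
      by rewrite -mulmxA -{1}[V]mulmx1 -sum1 mulmxDr !mulmxA hV1 mul0mx add0r.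
    rewrite {1}hV; apply: submxMr; apply/sub_kermxP.
    by rewrite mulmxA -hV hV2.
  set W := K2 *m EU.
  have hW : W *m A^T = 0 by rewrite -mulmxA mulmx_ker.
  have : (W <= B)%MS by apply: submx_trans sub2; apply/sub_kermxP.
  case/submxP => X eW.
  rewrite eW; apply: submxMr; apply/sub_kermxP.
  by rewrite mulmxA -eW /W -mulmxA disj mulmx0.
have := eqmx_rank eqK.
rewrite (mxrankMfree K1 fB) (mxrankMfree K2 fEU) /K1 /K2 !mxrank_ker.
have -> : EU *m A^T = (A *m EU^T)^T by rewrite trmx_mul trmxK.
rewrite mxrank_tr.
have h1 := rank_leq_row (B *m ET^T).
have h2 := rank_leq_col (A *m EU^T).
lia.
Qed.

Lemma enum_sorted n (c : {set 'I_n}) :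
  sorted (fun x y : 'I_n => (x < y)%N) (enum c).
Proof.
rewrite /enum_mem -enumT /=; apply: sorted_filter.
  by move=> x y z /= h1 h2; apply: ltn_trans h1 h2.
by have := iota_ltn_sorted 0 n; rewrite -val_enum_ord sorted_map.
Qed.

Lemma mem_tperm_imset n (b : {set 'I_n}) (j0 j1 x : 'I_n) :
  (x \in tperm j0 j1 @: b) = (tperm j0 j1 x \in b).
Proof.
apply/imsetP/idP => [[y yb ->]|h]; first by rewrite tpermK.
by exists (tperm j0 j1 x); rewrite ?tpermK.
Qed.

Lemma enum_tperm n (b : {set 'I_n}) (j0 j1 : 'I_n) :
  val j1 = (val j0).+1 -> (j0 \in b) && (j1 \in b) = false ->
  enum (tperm j0 j1 @: b) = map (tperm j0 j1) (enum b).
Proof.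
move=> e01 hb.
apply: (@irr_sorted_eq _ (fun x y : 'I_n => (x < y)%N)).
- by move=> x y z /= h1 h2; apply: ltn_trans h1 h2.
- by move=> x /=; rewrite ltnn.
- exact: enum_sorted.
- apply: (@homo_sorted_in _ _ (mem b) _ (fun x y : 'I_n => (x < y)%N)); last first.
  + exact: enum_sorted.
  + by apply/allP => x; rewrite mem_enum.
  move=> x y xb yb /= xy.
  have {}e01 : nat_of_ord j1 = (nat_of_ord j0).+1 := e01.
  have tv : forall z : 'I_n, nat_of_ord (tperm j0 j1 z) =
      if nat_of_ord z == nat_of_ord j0 then nat_of_ord j1 else if nat_of_ord z == nat_of_ord j1 then nat_of_ord j0 else nat_of_ord z.
    move=> z; case: tpermP => [->|->|h0 h1]; first by rewrite eqxx.
      by rewrite eqxx; case: eqP => // e; move: e; rewrite e01; lia.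
    have -> : (nat_of_ord z == nat_of_ord j0) = false by apply/eqP => e; apply: h0; apply: ord_inj.
    have -> : (nat_of_ord z == nat_of_ord j1) = false by apply/eqP => e; apply: h1; apply: ord_inj.
    by [].
  have nb1 : ~ (nat_of_ord x = nat_of_ord j0 /\ nat_of_ord y = nat_of_ord j1).
    case=> e1 e2; have ex : x = j0 := ord_inj e1; have ey : y = j1 := ord_inj e2.
    by move: hb; rewrite -ex -ey xb yb.
  have nb2 : ~ (nat_of_ord x = nat_of_ord j1 /\ nat_of_ord y = nat_of_ord j0).
    case=> e1 e2; have ex : x = j1 := ord_inj e1; have ey : y = j0 := ord_inj e2.
    by move: hb; rewrite -ex -ey xb yb.
  rewrite !tv; move: xy; do ![case: eqP => ?]; lia.
- move=> x; rewrite mem_enum mem_tperm_imset.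
  rewrite -[in RHS](tpermK j0 j1 x) mem_map ?mem_enum //.
  exact: (can_inj (tpermK j0 j1)).
Qed.

Lemma Sel_tperm (F : fieldType) p n (b : {set 'I_n}) (j0 j1 : 'I_n) :
  val j1 = (val j0).+1 -> (j0 \in b) && (j1 \in b) = false ->
  Sel p (tperm j0 j1 @: b) = (Sel p b : 'M[F]_(p, n)) *m perm_mx (tperm j0 j1).
Proof.
move=> e01 hb; rewrite -[X in _ *m perm_mx X]tpermV -col_permE.
apply/matrixP => i x; rewrite !mxE (enum_tperm e01 hb) mem_tperm_imset.
rewrite -[x in index x _](tpermK j0 j1 x) index_map //.
exact: (can_inj (tpermK j0 j1)).
Qed.

Lemma big_tperm (R : Type) (idx : R) (op : Monoid.com_law idx) n
   (a : {set 'I_n}) (j0 j1 : 'I_n) (g : 'I_n -> R) :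
  j0 \notin a -> j1 \in a ->
  \big[op/idx]_(i in tperm j0 j1 @: a) g i =
  op (g j0) (\big[op/idx]_(i in a | i != j1) g i).
Proof.
move=> j0a j1a; rewrite big_imset /=; last by move=> x y _ _; apply: (can_inj (tpermK j0 j1)).
rewrite (bigD1 j1) //= tpermR; congr (op _ _); apply: eq_bigr => i /andP[ia ij1].
rewrite tpermD // eq_sym //; apply: contraNneq j0a => <-; exact: ia.
Qed.

Definition sgn (F : fieldType) n (a : {set 'I_n}) : F := \prod_(i in a) (-1) ^+ (i : nat).
Definition mu n (a : {set 'I_n}) : nat := \sum_(i in a) (i : nat).

Lemma move_step (F : fieldType) p q (a : {set 'I_(p + q)}) (j0 j1 : 'I_(p + q)) :
  val j1 = (val j0).+1 -> j0 \notin a -> j1 \in a ->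
  [/\ \det (Pm F (tperm j0 j1 @: a)) * sgn F (tperm j0 j1 @: a) = \det (Pm F a) * sgn F a,
      #|tperm j0 j1 @: a| = #|a| & (mu (tperm j0 j1 @: a)).+1 = mu a].
Proof.
move=> e01 j0a j1a.
have ne : j0 != j1 by apply/eqP => e; move: e01; rewrite e; lia.
have hb1 : (j0 \in a) && (j1 \in a) = false by rewrite (negbTE j0a).
have hb2 : (j0 \in ~: a) && (j1 \in ~: a) = false by rewrite !inE j1a andbF.
have hC : ~: (tperm j0 j1 @: a) = tperm j0 j1 @: ~: a.
  by apply/setP => x; rewrite inE !mem_tperm_imset inE.
split.
- rewrite /Pm hC (Sel_tperm _ _ e01 hb1) (Sel_tperm _ _ e01 hb2) -mul_col_mx.
  rewrite det_mulmx det_perm odd_tperm ne expr1 /sgn big_tperm // [in RHS](bigD1 j1) //=.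
  have -> : nat_of_ord j1 = (nat_of_ord j0).+1 := e01.
  rewrite exprS; ring.
- by rewrite card_imset //; apply: (can_inj (tpermK j0 j1)).
- rewrite /mu big_tperm // [in RHS](bigD1 j1) //=.
  have -> : nat_of_ord j1 = (nat_of_ord j0).+1 := e01.
  by rewrite addSn.
Qed.

Lemma exists_move n p (a b0 : {set 'I_n}) :
  #|a| = p -> #|b0| = p -> (forall x : 'I_n, (x \in b0) = (x < p)%N) -> a != b0 ->
  exists j0 j1 : 'I_n, [/\ val j1 = (val j0).+1, j0 \notin a & j1 \in a].
Proof.
move=> ha hb hb0 neq.
have claim : forall k (x : 'I_n), nat_of_ord x = k -> x \in a ->
    (exists j0 j1 : 'I_n, [/\ val j1 = (val j0).+1, j0 \notin a & j1 \in a]) \/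
    (forall y : 'I_n, (y <= x)%N -> y \in a).
  elim=> [|k IH] x ex xa.
    by right => y yx; have -> : y = x by apply: ord_inj; lia.
  have kn : (k < n)%N by have := ltn_ord x; lia.
  case x0a : (Ordinal kn \in a).
    case: (IH (Ordinal kn) erefl x0a) => [L|R]; first by left.
    right => y yx; case: (ltnP k y) => hy.
      by have -> : y = x by apply: ord_inj; lia.
    by apply: R.
  by left; exists (Ordinal kn), x; split => //=; rewrite ?x0a //; rewrite ex.
case: (boolP [exists x in a, (p <= x)%N]) => [/exists_inP [x xa px]|].
  case: (claim _ x erefl xa) => // R.
  have sub : b0 \subset a by apply/subsetP => y; rewrite hb0 => yp; apply: R; lia.
  by move: neq; rewrite eq_sym eqEcard sub ha hb leqnn.
move/exists_inPn => h.
have sub : a \subset b0 by apply/subsetP => y ya; rewrite hb0; have := h y ya; rewrite -ltnNge.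
by move: neq; rewrite eqEcard sub ha hb leqnn.
Qed.

Definition abot p q : {set 'I_(p + q)} := [set lshift q i | i : 'I_p].

Lemma abot_card p q : #|abot p q| = p.
Proof. by rewrite card_imset ?card_ord //; apply: lshift_inj. Qed.

Lemma abot_mem p q (x : 'I_(p + q)) : (x \in abot p q) = (x < p)%N.
Proof.
apply/imsetP/idP => [[i _ ->]|xp]; first by rewrite /= ltn_ord.
by exists (Ordinal xp) => //; apply: ord_inj.
Qed.

Lemma sgn_const (F : fieldType) p q (a : {set 'I_(p + q)}) :
  #|a| = p -> \det (Pm F a) * sgn F a = \det (Pm F (abot p q)) * sgn F (abot p q).
Proof.
have : forall N (a : {set 'I_(p + q)}), (mu a < N)%N -> #|a| = p ->
    \det (Pm F a) * sgn F a = \det (Pm F (abot p q)) * sgn F (abot p q).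
  elim=> [|N IH] a0 // ha0 ca0.
  case: (eqVneq a0 (abot p q)) => [-> //|ne].
  have [j0 [j1 [e01 j0a j1a]]] := exists_move ca0 (abot_card p q) (@abot_mem p q) ne.
  have [E C M] := move_step F e01 j0a j1a.
  rewrite -E; apply: IH; last by rewrite C.
  by move: ha0; rewrite -M.
by move=> h ha; apply: (h (mu a).+1).
Qed.

Lemma sgn_sq (F : fieldType) n (a : {set 'I_n}) : sgn F a * sgn F a = 1.
Proof.
rewrite /sgn -big_split /=; apply: big1 => i _.
by rewrite -exprMn mulrNN mulr1 expr1n.
Qed.

Lemma sgn_compl (F : fieldType) n (a : {set 'I_n}) :
  sgn F a * sgn F (~: a) = \prod_(i : 'I_n) (-1) ^+ (i : nat).
Proof.
rewrite /sgn [RHS](bigID (mem a)) /=; congr (_ * _).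
by apply: eq_bigl => i; rewrite inE.
Qed.

Lemma sgn_neq0 (F : fieldType) n (a : {set 'I_n}) : sgn F a != 0.
Proof. by apply/eqP => h; have := sgn_sq F a; rewrite h mul0r => /eqP; rewrite eq_sym oner_eq0. Qed.

Lemma core_pq (F : fieldType) p q (A : 'M[F]_(p, p + q)) : row_free A ->
  exists B : 'M[F]_(q, p + q), [/\ row_free B,
    (exists2 c : F, c != 0 & forall a : {set 'I_(p + q)}, #|a| = p -> pluck B (~:a) = c * pluck A a) &
    forall T, (\rank (colS B T) + #|~:T| = q + \rank (colS A (~:T)))%N ].
Proof.
move=> fA.
have [B' /andP[fB' eB']] := kerbasis (q := q) fA erefl.
have AB : A *m B'^T = 0.
  have : B' *m A^T = 0 by apply/sub_kermxP; case/andP: eB'.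
  by move/(congr1 trmx); rewrite trmx_mul trmxK trmx0.
pose d := fun i : 'I_(p + q) => ((-1) ^+ (i : nat) : F).
have hd : forall i, d i != 0.
  by move=> i; rewrite /d expf_neq0 // oppr_eq0 oner_eq0.
exists (B' *m Dg d); split.
- by rewrite /row_free mxrankMfree //; apply: (Dg_free (fun j => j)).
- have [a0 [ha0 nz0]] := NZ fA.
  set pB0 := pluck B' (~: a0).
  set X := \det (Pm F a0) * pluck A a0 * (\det (Pm F (abot p q)) * sgn F (abot p q)).
  have dPnz : forall a : {set 'I_(p + q)}, #|a| = p -> \det (Pm F a) != 0.
    move=> a ha; apply/eqP => h; have := Pm_det2 F ha; rewrite h mul0r => /eqP.
    by rewrite eq_sym oner_eq0.
  have key : forall a : {set 'I_(p + q)}, #|a| = p ->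
      \det (Pm F a0) * pluck A a0 * (\det (Pm F a) * pluck B' (~: a)) = pluck A a * pB0.
    move=> a ha; have := det_id (Sel q (~: a0)) (Sel p a) AB.
    rewrite (F1a _ ha0) (F1b _ ha) -pluckE.
    have -> : Sel q (~: a0) *m B'^T = (B' *m (Sel q (~: a0))^T)^T by rewrite trmx_mul trmxK.
    by rewrite det_tr -pluckE mulrA.
  have Xnz : X != 0.
    rewrite /X -(sgn_const F ha0) !mulf_neq0 ?dPnz ?sgn_neq0 //.
  have pB0nz : pB0 != 0.
    apply/eqP => h0.
    have [b [hb nzb]] := NZ fB'.
    have hcb : #|~: b| = p.
      by have := cardsC b; rewrite card_ord hb addnC => /eqP; rewrite eqn_add2r => /eqP.
    have := key _ hcb; rewrite h0 mulr0 setCK => /eqP.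
    rewrite !mulf_eq0 (negbTE (dPnz _ ha0)) (negbTE nz0) (negbTE (dPnz _ hcb)) (negbTE nzb).
    by [].
  exists ((\prod_(i : 'I_(p + q)) d i) * pB0 / X).
    by rewrite !mulf_neq0 ?invr_eq0 //; apply/prodf_neq0 => i _.
  move=> a ha; have hca := cardC_pq ha.
  rewrite pluck_scale //.
  have -> : \prod_(i in ~: a) d i = sgn F (~: a) by [].
  have e2 : sgn F (~: a) = (\prod_(i : 'I_(p + q)) d i) * sgn F a.
    by rewrite -(sgn_compl F a) mulrAC sgn_sq mul1r.
  have e3 : \det (Pm F a) = (\det (Pm F (abot p q)) * sgn F (abot p q)) * sgn F a.
    by rewrite -(sgn_const F ha) -mulrA sgn_sq mulr1.
  have e1 : pluck B' (~: a) * sgn F a = pluck A a * pB0 / X.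
    rewrite -(key a ha) e3 /X; field.
    by rewrite sgn_neq0 nz0 !dPnz ?abot_card.
  rewrite e2 mulrCA e1; field.
  exact: Xnz.
- move=> T; rewrite rank_scale //; exact: rank_formula.
Qed.

Lemma core (F : fieldType) p q n (e : (p + q)%N = n) (A : 'M[F]_(p, n)) : row_free A ->
  exists B : 'M[F]_(q, n), [/\ row_free B,
    (exists2 c : F, c != 0 & forall a : {set 'I_n}, #|a| = p -> pluck B (~:a) = c * pluck A a) &
    forall T, (\rank (colS B T) + #|~:T| = q + \rank (colS A (~:T)))%N ].
Proof. by subst n; apply: core_pq. Qed.

Lemma card_cyc n alpha m : (m <= n)%N -> (0 < n)%N -> #|cyc_interval n alpha m| = m.
Proof.
move=> mn n0.
pose g := fun j : 'I_m => Ordinal (ltn_pmod (alpha + j) n0).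
have -> : cyc_interval n alpha m = g @: setT.
  apply/setP => i; rewrite inE; apply/existsP/imsetP => [[j /eqP h]|[j _ ->]].
    by exists j => //; apply: ord_inj.
  by exists j.
rewrite card_imset ?cardsT ?card_ord // => j1 j2 /(congr1 val) /= /eqP.
rewrite eqn_modDl !modn_small ?(leq_trans (ltn_ord _) mn) // => /eqP h.
exact: ord_inj.
Qed.

Theorem proposition3p15 (F : closedFieldType) (k n alpha m r : nat) :
  [pchar F] =i pred0 ->
  (1 <= k < n)%N -> (alpha <= n - 1)%N -> (1 <= m < n)%N -> (r < m)%N ->
  let S := cyc_interval n alpha m in
  let Sv := ~: S in
  let rv : int := (n%:Z - k%:Z - m%:Z + r%:Z)%R in
  (* phi(X_{S<=r}) is contained in X_{Sv<=rv} *)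
  (forall A : 'M[F]_(k, n), row_free A -> inX S r%:Z A ->
     exists B : 'M[F]_(n - k, n), [/\ row_free B, phi_rel A B & inX Sv rv B]) /\
  (* and every point of X_{Sv<=rv} is phi of a point of X_{S<=r} *)
  (forall B : 'M[F]_(n - k, n), row_free B -> inX Sv rv B ->
     exists A : 'M[F]_(k, n), [/\ row_free A, phi_rel A B & inX S r%:Z A]).
Proof.
move=> _ /andP[k1 kn] _ /andP[m1 mn] rm S Sv rv.
have cS : #|S| = m by apply: card_cyc; lia.
have cSv : #|Sv| = (n - m)%N.
  by have h := cardsC S; rewrite card_ord cS in h; rewrite /Sv; lia.
split.
- move=> A fA hA.
  have e : (k + (n - k))%N = n by lia.
  have [B [fB [c cnz hc] hr]] := core e fA.
  exists B; split => //; first by exists c.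
  move: hA; rewrite /inX /rv /Sv; have := hr (~: S); rewrite setCK => h.
  rewrite !lez_nat => hA.
  lia.
- move=> B fB hB.
  have e : ((n - k) + k)%N = n by lia.
  have [A [fA [c cnz hc] hr]] := core e fB.
  exists A; split => //.
    exists c^-1; first by rewrite invr_eq0.
    move=> a ha.
    have hca : #|~: a| = (n - k)%N.
      by have h := cardsC a; rewrite card_ord ha in h; lia.
    have := hc _ hca; rewrite setCK => ->.
    by rewrite mulrA mulVf // mul1r.
  move: hB; rewrite /inX /rv; have := hr S; rewrite -/Sv => h.
  rewrite !lez_nat => hB.
  lia.
Qed.
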